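(* Consider the partial-block protocol described in the context, on a finite set of agents $A$ with a connected undirected connectivity graph $G=(A,E)$ and block length $L$. If at some epoch $t$ a deadlock occurs, i.e. $D(i)$ holds for every $i\in A$, then for every edge $(i,j)\in E$ we have $\{i,j\}\subseteq pb_i^{(t)}$ (and symmetrically $\{i,j\}\subseteq pb_j^{(t)}$).
   Context: Let $A$ be a finite set of agents (agent IDs) and $G=(A,E)$ a connected undirected graph; $\Gamma_i$ denotes the set of neighbors of $i$. Fix an integer $L\ge 1$ (block length). Each agent $i$ maintains a partial block $pb_i\subseteq A$ (a set of agent IDs). The system runs in epochs $t=0,1,2,\dots$; $pb_i^{(t)}$ is agent $i$'s partial block at the start of epoch $t$. In each epoch: (C1) every agent $i$ with $i\notin pb_i$ adds $i$ to $pb_i$; (C2) every agent $i$ sends its $pb_i$ to every neighbor $j\in\Gamma_i$. When an agent $i$ receives a partial block $P$ (from a neighbor or via a direct message) it applies the rule: (R1) if $|P\setminus\{i\}|>|pb_i\setminus\{i\}|$, agent $i$ sets $pb_i:=P$; (R2) otherwise, if $|P\setminus\{i\}|=|pb_i\setminus\{i\}|$ and $P\neq pb_i$, agent $i$ sends its current $pb_i$ directly to every agent in $P\setminus pb_i$, each of which processes it by the same rule; (R3) otherwise the received block is discarded. All received partial blocks are assumed to pass all validity and similarity checks. For an agent $i$ and epoch $t$, the predicate $D(i)$ means: $pb_i^{(t)}=pb_i^{(t+1)}$ and $|pb_i^{(t)}|<L$. A deadlock at epoch $t$ means that $D(i)$ holds for all $i\in A$. *)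

(* Defs.v *)
From mathcomp Require Import all_boot.
Set Implicit Arguments. Unset Strict Implicit. Unset Printing Implicit Defensive.

Section Protocol.
Variable A : finType.

Definition pbstate := A -> {set A}.

(* A message: (receiver, partial block carried). *)
Definition msg := (A * {set A})%type.

Definition upd (pb : pbstate) (i : A) (P : {set A}) : pbstate :=
  fun k => if k == i then P else pb k.

(* Agent i receives partial block P in state pb: rules R1/R2/R3.
   Returns the new state and the direct messages sent (R2). *)
Definition recv (i : A) (P : {set A}) (pb : pbstate) : pbstate * seq msg :=
  if #|pb i :\ i| < #|P :\ i| then (upd pb i P, [::])
  else if (#|P :\ i| == #|pb i :\ i|) && (P != pb i)
       then (pb, [seq (x, pb i) | x <- enum (P :\: pb i)])
       else (pb, [::]).

Inductive deliver_step : pbstate * seq msg -> pbstate * seq msg -> Prop :=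
| DStep (pb : pbstate) (s1 s2 : seq msg) (i : A) (P : {set A}) :
    deliver_step (pb, s1 ++ (i, P) :: s2)
                 ((recv i P pb).1, s1 ++ s2 ++ (recv i P pb).2).

Inductive star (R : pbstate * seq msg -> pbstate * seq msg -> Prop)
  : pbstate * seq msg -> pbstate * seq msg -> Prop :=
| star_refl x : star R x x
| star_step x y z : R x y -> star R y z -> star R x z.

Definition phaseC1 (pb : pbstate) : pbstate :=
  fun i => if i \in pb i then pb i else i |: pb i.

Definition phaseC2 (G : rel A) (pb : pbstate) : seq msg :=
  flatten [seq [seq (j, pb i) | j <- enum A & G i j] | i <- enum A].

(* One epoch from pb (state at start of epoch t) to pb' (state at start of
   epoch t+1): C1, then C2, then all messages (including direct R2
   messages) are received and processed in some arbitrary order, until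
   no message is pending. *)
Definition epoch (G : rel A) (pb pb' : pbstate) : Prop :=
  star deliver_step (phaseC1 pb, phaseC2 G (phaseC1 pb)) (pb', [::]).

Definition Dpred (L : nat) (pb pb' : pbstate) (i : A) : Prop :=
  pb i = pb' i /\ #|pb i| < L.

Definition deadlock (L : nat) (pb pb' : pbstate) : Prop :=
  forall i : A, Dpred L pb pb' i.

Definition undirected_connected (G : rel A) : Prop :=
  symmetric G /\ (forall i j : A, connect G i j).

End Protocol.

(* Main.v *)
From Stdlib Require Import FunctionalExtensionality.
Require Import Defs.
From mathcomp Require Import all_boot.
From mathcomp Require Import zify.
Set Implicit Arguments.

Section S.
Variable A : finType.

Definition mrel (k : A) (X Y : {set A}) :=
  X = Y \/ #|X :\ k| < #|Y :\ k|.

Lemma step_mono x y : deliver_step x y -> forall k, mrel k (x.1 k) (y.1 k).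
Proof.
case=> pb s1 s2 i P k /=; rewrite /recv.
case: ifP => H; last by case: ifP => _; left.
rewrite /= /upd; case: eqP => [->|_]; [by right | by left].
Qed.

Lemma star_mono x y : star (@deliver_step A) x y -> forall k, mrel k (x.1 k) (y.1 k).
Proof.
elim=> [z|a b c Hab _ IH] k; first by left.
case: (step_mono Hab k) => [->|H1]; first exact: IH.
case: (IH k) => [<-|H2]; right => //; exact: ltn_trans H2.
Qed.

Lemma key (pb : pbstate A) x y : star (@deliver_step A) x y -> y.2 = [::] ->
  x.1 = pb -> y.1 = pb ->
  forall m, m \in x.2 -> ~~ (#|pb m.1 :\ m.1| < #|m.2 :\ m.1|).
Proof.
elim=> [z|a b c Hab Hbc IH] Hn Ha Hc m.
  by rewrite Hn.
case: Hab Ha Hbc IH => q s1 s2 i P /= -> Hbc IH.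
have Hb : (recv i P pb).1 = pb.
  apply: functional_extensionality => k.
  case: (step_mono (DStep pb s1 s2 i P) k) => /= [<-//|H1].
  case: (star_mono Hbc k) => /= [E|H2].
    by move: H1; rewrite E Hc ltnn.
  by move: (ltn_trans H1 H2); rewrite Hc ltnn.
have IH' := IH Hn Hb Hc.
rewrite mem_cat in_cons => /or3P[H|/eqP->|H].
- apply: IH' => /=; by rewrite mem_cat H.
- apply/negP => /= Hlt; move: Hb.
  rewrite /recv Hlt => /(congr1 (fun f => f i)); rewrite /upd /=; case: eqP => // _ E.
  by move: Hlt; rewrite E ltnn.
- apply: IH' => /=; by rewrite !mem_cat H orbT.
Qed.

End S.

Theorem lemma2 (A : finType) (G : rel A) (L : nat)
  (pb pb' : pbstate A) :
  undirected_connected G -> 1 <= L ->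
  epoch G pb pb' ->
  deadlock L pb pb' ->
  forall i j : A, G i j ->
    [set i; j] \subset pb i /\ [set i; j] \subset pb j.
Proof.
move=> [Gsym _] _ He Hd.
have Epb : pb' = pb by apply: functional_extensionality => k; case: (Hd k).
subst pb'.
have Hin : forall k, k \in pb k.
  move=> k; case: (star_mono He k) => /=; rewrite /phaseC1;
    case: ifP => // Hk.
    by move=> E; rewrite -Hk -E setU11.
  by rewrite setDUl setDv set0U ltnn.
have C1 : phaseC1 pb = pb.
  by apply: functional_extensionality => k; rewrite /phaseC1 Hin.
rewrite /epoch C1 in He.
have K := key He erefl erefl erefl.
have Mem : forall a b, G a b -> (b, pb a) \in phaseC2 G pb.
  move=> a b Gab; apply/flatten_mapP; exists a; first by rewrite mem_enum.
  by apply: map_f; rewrite mem_filter Gab mem_enum.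
have half : forall a b, G a b -> b \in pb a.
  move=> a b Gab; apply/negPn/negP => Hb.
  have K1 := K _ (Mem _ _ Gab).
  have K2 := K _ (Mem _ _ (etrans (Gsym b a) Gab)).
  move: K1 K2 => /=; rewrite !ltnNge !negbK => K1 K2.
  have c1 := cardsD1 a (pb a).
  have c2 := cardsD1 b (pb a).
  have c3 := cardsD1 b (pb b).
  have c4 := cardsD1 a (pb b).
  move: c1 c2 c3 c4; rewrite Hin (negbTE Hb) Hin.
  case: (a \in pb b) => /=; lia.
move=> i j Gij; split; apply/subsetP => x; rewrite !inE => /orP[]/eqP->;
  by rewrite ?Hin ?half // Gsym.
Qed.
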